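(* Let $G$ be a simple 2-connected plane graph whose unbounded face $p_\infty$ has $V_\infty$ vertices. Let $(a,b)$ be an admissible state such that (1) there is a bounded face $p$ and an edge $vv'$ lying on the boundary of both $p$ and $p_\infty$ with $b_v=b_{v'}=0$ and $(b_v-b_p)(b_{v'}-b_p)=1$; (2) $a_{p'}+b_{p'}=0$ for every bounded face $p'$; (3) $(b_{v_1}-b_{p'})(b_{v_2}-b_{p'})=0$ for every bounded face $p'$ and every edge $v_1v_2$ of $p'$ that does not lie on the boundary of $p_\infty$. Then $b_w\ge-1$ for every vertex $w$, $a_{p'}=1$ for every bounded face $p'$, and $B(a,b)\ge V_\infty-2$. Moreover $B(a,b)=V_\infty-2$ if and only if $b_w=0$ for every vertex $w$ on $p_\infty$, $b_w=-1$ for every other vertex $w$, and $a_{p'}=1$ for every bounded face $p'$.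
   Context: A simple 2-connected plane graph $G$ is a simple 2-connected planar graph with a fixed embedding in the plane, so every face is bounded by a cycle. For a face $p$, $l(p)$ is the number of edges on its boundary and $v\in p$ means $v$ lies on the boundary of $p$. An admissible state $(a,b)$ assigns an integer $a_p$ to each bounded face $p$ and an integer $b_v$ to each vertex $v$ such that $a_p+b_v\ge 0$ whenever $p$ is bounded and $v\in p$, and $b_v\ge0$ for every vertex $v$ on $p_\infty$. For a bounded face $p$, $b_p=\min_{v\in p}b_v$. $B(a,b)=2\sum_{v}b_v+\sum_p (l(p)-2)a_p$, with $p$ over bounded faces and $v$ over all vertices. *)

(* Defs.v *)
(* Plane graphs are encoded as combinatorial maps
   (rotation systems) of genus 0. *)
From HB Require Import structures.
From mathcomp Require Import all_boot all_order all_algebra.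
Set Implicit Arguments. Unset Strict Implicit. Unset Printing Implicit Defensive.
Import Order.TTheory GRing.Theory Num.Theory.

(* A connected plane graph, given as a combinatorial map:
   - darts = oriented edges; [alpha] reverses a dart (fixed-point-free involution);
   - [sigma] is the rotation of darts around their tail vertex (a permutation);
   - vertices are the sigma-orbits (named by [vert]),
   - faces are the orbits of the face permutation [sigma \o alpha] (named by [fc]);
     the dart x (from vert x to vert (alpha x)) is a boundary edge of face fc x;
   - [outer] is the unbounded face p_infinity;
   - Euler's formula V - E + F = 2 expresses that the embedding is in the
     plane (sphere). *)
Record plane_graph := PlaneGraph {
  dart : finType;
  vertex : finType;
  face : finType;
  alpha : dart -> dart;
  sigma : dart -> dart;
  vert : dart -> vertex;
  fc : dart -> face;
  outer : face;
  alphaK : forall x, alpha (alpha x) = x;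
  alpha_nofix : forall x, alpha x != x;
  sigma_inj : injective sigma;
  vertE : forall x y, (vert x == vert y) = fconnect sigma x y;
  vert_surj : forall v, exists x, vert x = v;
  fcE : forall x y, (fc x == fc y) = fconnect (fun z => sigma (alpha z)) x y;
  fc_surj : forall p, exists x, fc x = p;
  euler : #|vertex| + #|face| = #|dart| %/ 2 + 2
}.

Section Defs.
Variable G : plane_graph.

Definition adj (u v : vertex G) : bool :=
  [exists x : dart G, (vert x == u) && (vert (alpha x) == v)].

Definition simple_graph : Prop :=
  (forall x : dart G, vert (alpha x) != vert x) /\
  (forall x y : dart G, vert x = vert y -> vert (alpha x) = vert (alpha y) -> x = y).

Definition two_connected : Prop :=
  2 < #|vertex G| /\
  forall w u v : vertex G, u != w -> v != w ->
    connect [rel s t | adj s t && (s != w) && (t != w)] u v.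

Definition on_face (v : vertex G) (p : face G) : bool :=
  [exists x : dart G, (fc x == p) && (vert x == v)].

Definition edge_on (v1 v2 : vertex G) (p : face G) : bool :=
  [exists x : dart G, (fc x == p) &&
     (((vert x == v1) && (vert (alpha x) == v2)) ||
      ((vert x == v2) && (vert (alpha x) == v1)))].

Definition bounded (p : face G) : bool := p != outer G.

Definition flen (p : face G) : nat := #|[set x : dart G | fc x == p]|.

Definition Vinf : nat := #|[set v : vertex G | on_face v (outer G)]|.

Local Open Scope ring_scope.

Definition minl (s : seq int) : int := foldr Order.min (head 0 s) s.

Definition bface (b : vertex G -> int) (p : face G) : int :=
  minl [seq b v | v <- enum (vertex G) & on_face v p].

Definition admissible (a : face G -> int) (b : vertex G -> int) : Prop :=
  (forall p v, bounded p -> on_face v p -> 0 <= a p + b v) /\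
  (forall v, on_face v (outer G) -> 0 <= b v).

Definition Bval (a : face G -> int) (b : vertex G -> int) : int :=
  2 * \sum_(v : vertex G) b v +
  \sum_(p : face G | bounded p) ((flen p)%:Z - 2) * a p.

End Defs.

(* Main.v *)
Require Import Defs.
From HB Require Import structures.
From mathcomp Require Import all_boot all_order all_algebra.
From mathcomp Require Import all_fingroup zify.
Import Order.TTheory GRing.Theory Num.Theory.

Set Implicit Arguments. Unset Strict Implicit. Unset Printing Implicit Defensive.


Section Ker.
Lemma card_ker (A B C : finType) (S : {pred A}) (f : A -> B) (g : A -> C) :
  {in S &, forall u w, g u = g w -> f u = f w} -> #|f @: S| <= #|g @: S|.
Proof.
move=> H.
pose h c := omap f [pick z in S | g z == c].
have -> : #|f @: S| = #|Some @: (f @: S)| by rewrite (card_imset _ (@Some_inj _)).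
apply: (leq_trans _ (leq_imset_card h _)); apply: subset_leq_card.
apply/subsetP=> _ /imsetP[_ /imsetP[u uS ->] ->].
apply/imsetP; exists (g u); first by apply: imset_f.
rewrite /h; case: pickP => [z /andP[zS /eqP gz]|/(_ u)]; last by rewrite uS eqxx.
by rewrite /= (H z u).
Qed.
End Ker.

Section Genus.
Variable T : finType.
Implicit Types a b s : {perm T}.

Definition rr a b : rel T := fun u w =>
  (w == a u) || (u == a w) || (w == b u) || (u == b w).

Lemma rr_sym a b : symmetric (rr a b).
Proof.
move=> u w; rewrite /rr.
by case: (w == a u); case: (u == a w); case: (w == b u); case: (u == b w).
Qed.

Lemma rr_csym a b : connect_sym (rr a b).
Proof. exact: sym_connect_sym (rr_sym a b). Qed.

Definition comp a b z := [set w | connect (rr a b) z w].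
Definition ncomp a b := #|[set comp a b z | z : T]|.

Lemma comp_eq a b z w : connect (rr a b) z w -> comp a b z = comp a b w.
Proof.
move=> c; apply/setP=> u; rewrite !inE; apply/idP/idP => h.
  by apply: connect_trans h; rewrite rr_csym.
exact: connect_trans c h.
Qed.

Lemma porbit_fconnect s x y : (y \in porbit s x) = fconnect s x y.
Proof.
apply/idP/idP.
  by case/porbitP=> i ->; rewrite permX fconnect_iter.
by move/iter_findex <-; rewrite -permX mem_porbit.
Qed.

Lemma porbit_rr a b z w : w \in porbit b z -> connect (rr a b) z w.
Proof.
case/porbitP=> i ->; rewrite permX; elim: i => [|i IH] /=; first exact: connect0.
apply: connect_trans IH _; apply: connect1; by rewrite /rr eqxx !orbT.
Qed.

Lemma porbitM_rr a b z w : w \in porbit (a * b) z -> connect (rr a b) z w.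
Proof.
case/porbitP=> i ->; rewrite permX; elim: i => [|i IH] /=; first exact: connect0.
apply: connect_trans IH _; rewrite permM.
set u := iter i _ z.
have h1 : rr a b u (a u) by rewrite /rr eqxx.
have h2 : rr a b (a u) (b (a u)) by rewrite /rr eqxx !orbT.
exact: connect_trans (connect1 h1) (connect1 h2).
Qed.

Lemma porbit_step s z u : (s u \in porbit s z) = (u \in porbit s z).
Proof.
rewrite porbit_sym [RHS]porbit_sym.
have -> : s u = (s ^+ 1)%g u by rewrite expg1.
by rewrite porbit_perm.
Qed.

Lemma comp1 b z : comp 1 b z = porbit b z.
Proof.
apply/setP=> w; rewrite inE; apply/idP/idP; last exact: porbit_rr.
have cl : closed (rr 1 b) (porbit b z).
  move=> u v; rewrite /rr !perm1 => /orP[/orP[/orP[]|]|] /eqP ->.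
  - by [].
  - by [].
  - by rewrite porbit_step.
  - by rewrite porbit_step.
by move/(closed_connect cl); rewrite porbit_id.
Qed.

Lemma card_porbits s : #|porbits s| <= #|T|.
Proof. exact: leq_imset_card. Qed.

Lemma card_porbits1 : #|porbits (1 : {perm T})| = #|T|.
Proof.
rewrite /porbits card_imset // => u w e.
have : w \in porbit 1 u by rewrite e porbit_id.
by case/porbitP=> i ->; rewrite expg1n perm1.
Qed.

Section Step.
Variables (a b : {perm T}) (x : T).
Hypothesis ax : a x != x.
Let y := a x.
Let t := tperm x y.
Let a' := (t * a)%g.
Let r := rr a b.
Let r' := rr a' b.

Lemma a'E u : a' u = if u == x then a y else if u == y then y else a u.
Proof.
rewrite permM /t; case: tpermP => [->|->|nx ny]; rewrite ?eqxx.
- by [].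
- by rewrite /y (negbTE ax).
- by move/eqP/negbTE: nx => ->; move/eqP/negbTE: ny => ->.
Qed.

Lemma step1 u w : r' u w -> connect r u w.
Proof.
have H : forall u w, w = a' u -> connect r u w.
  move=> {}u {}w ->; rewrite a'E.
  case: eqP => [->|_].
    have h1 : r x y by rewrite /r /rr eqxx.
    have h2 : r y (a y) by rewrite /r /rr eqxx.
    exact: connect_trans (connect1 h1) (connect1 h2).
  case: eqP => [->|_]; first exact: connect0.
  by apply: connect1; rewrite /r /rr eqxx.
move=> /orP[/orP[/orP[]|]|] /eqP e.
- exact: H.
- by rewrite rr_csym; apply: H.
- by apply: connect1; rewrite /r /rr e eqxx !orbT.
- by apply: connect1; rewrite /r /rr e eqxx !orbT.
Qed.

Lemma F1 u w : connect r' u w -> connect r u w.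
Proof. by move=> h; apply: (@connect_sub _ r' r step1). Qed.

Definition R3 u w := [|| connect r' u w,
   connect r' u x && connect r' w y | connect r' u y && connect r' w x].

Lemma R3_sym u w : R3 u w -> R3 w u.
Proof.
rewrite /R3 (rr_csym a' b u w).
by case/or3P=> [->|/andP[->->]|/andP[->->]]; rewrite ?orbT.
Qed.

Lemma step3 u w : r u w -> R3 u w.
Proof.
have H : forall u w, w = a u -> R3 u w.
  move=> {}u {}w ->.
  case: (eqVneq u x) => [->|nx].
    by rewrite /R3; apply/or3P; apply: Or32; apply/andP; split; exact: connect0.
  case: (eqVneq u y) => [->|ny].
    rewrite /R3; apply/or3P; apply: Or33; apply/andP; split; first exact: connect0.
    by rewrite rr_csym; apply: connect1; rewrite /r' /rr a'E eqxx /= eqxx.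
  by rewrite /R3; apply/or3P; apply: Or31; apply: connect1; rewrite /r' /rr a'E (negbTE nx) (negbTE ny) eqxx.
move=> /orP[/orP[/orP[]|]|] /eqP e.
- exact: H.
- by apply: R3_sym; apply: H.
- by rewrite /R3; apply/or3P; apply: Or31; apply: connect1; rewrite /r' /rr e eqxx !orbT.
- by rewrite /R3; apply/or3P; apply: Or31; apply: connect1; rewrite /r' /rr e eqxx !orbT.
Qed.

Lemma R3_trans u v w : R3 u v -> R3 v w -> R3 u w.
Proof.
have sy := rr_csym a' b.
have sy' : forall p q, connect r' p q -> connect r' q p by move=> p q; rewrite sy.
rewrite /R3 => /or3P[h1|/andP[h1 h2]|/andP[h1 h2]] /or3P[h3|/andP[h3 h4]|/andP[h3 h4]];
 apply/or3P.
- by apply: Or31; apply: connect_trans h1 h3.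
- by apply: Or32; rewrite (connect_trans h1 h3) h4.
- by apply: Or33; rewrite (connect_trans h1 h3) h4.
- by apply: Or32; rewrite h1 (connect_trans (sy' _ _ h3) h2).
- by apply: Or32; rewrite h1 h4.
- by apply: Or31; apply: connect_trans h1 (sy' _ _ h4).
- by apply: Or33; rewrite h1 (connect_trans (sy' _ _ h3) h2).
- by apply: Or31; apply: connect_trans h1 (sy' _ _ h4).
- by apply: Or33; rewrite h1 h4.
Qed.

Lemma F2 u w : connect r u w -> R3 u w.
Proof.
case/connectP=> p pth ->; elim: p u pth => [|v p IH] u /=.
  by move=> _; rewrite /R3 connect0.
by case/andP=> ruv pv; apply: R3_trans (step3 ruv) (IH _ pv).
Qed.

Lemma K1 : connect r' x y -> ncomp a' b = ncomp a b.
Proof.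
move=> cxy; suff e : comp a' b =1 comp a b by rewrite /ncomp (eq_imset _ e).
move=> z; apply/setP=> w.
rewrite !inE; apply/idP/idP; first exact: F1.
have sy := rr_csym a' b; case/F2/or3P=> [//|/andP[h1 h2]|/andP[h1 h2]].
  by apply: connect_trans h1 _; apply: connect_trans cxy _; rewrite sy.
by apply: connect_trans h1 _; rewrite sy in cxy; apply: connect_trans cxy _; rewrite sy.
Qed.

Lemma K2 : ncomp a' b <= (ncomp a b).+1.
Proof.
pose U := [set z | ~~ connect r' z y].
have sub : [set comp a' b z | z : T] \subset comp a' b @: U :|: [set comp a' b y].
  apply/subsetP=> _ /imsetP[z _ ->]; rewrite inE.
  case: (boolP (connect r' z y)) => h.
    by rewrite (comp_eq h) set11 orbT.
  by rewrite imset_f // inE.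
rewrite /ncomp; apply: (leq_trans (subset_leq_card sub)).
rewrite (leq_trans (leq_card_setU _ _)) // cards1 addn1 ltnS.
apply: (@leq_trans #|comp a b @: U|); last first.
  by apply: subset_leq_card; apply: imsetS; apply/subsetP.
apply: card_ker => u w; rewrite !inE => nu nw e.
have : w \in comp a b u by rewrite e inE connect0.
rewrite inE => /F2/or3P[h|/andP[_ h]|/andP[h _]].
- exact: comp_eq.
- by rewrite h in nw.
- by rewrite h in nu.
Qed.

Lemma genus_step :
  #|porbits a'| + #|porbits b| + #|porbits (a' * b)| <= #|T| + 2 * ncomp a' b ->
  #|porbits a| + #|porbits b| + #|porbits (a * b)| <= #|T| + 2 * ncomp a b.
Proof.
move=> IH.
have ca : #|porbits a'| = (#|porbits a|).+1.
  have := porbits_mul_tperm a x y.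
  rewrite -/t -/a' porbit_sym /y (mem_porbit a 1 x) eq_sym ax /=.
  move=> /= h; rewrite /a'; lia.
have xy : x != y by rewrite /y eq_sym.
have -> : (a * b = tperm x y * (a' * b))%g by rewrite /a' /t !mulgA tperm2 mul1g.
move: (porbits_mul_tperm (a' * b)%g x y); rewrite /= xy => cab.
case: (boolP (connect r' x y)) => cxy.
  rewrite -K1 //; move: cab; case: (x \notin _); rewrite /= -mul2n => cab;
  set P := #|porbits (a' * b)%g| in IH cab *;
  set Q := #|porbits (tperm x y * (a' * b))%g| in cab *;
  set A := #|porbits a'| in IH ca; set B := #|porbits b| in IH *;
  set K := ncomp a' b in IH *; set N := #|T| in IH *;
  set C := #|porbits a| in ca *; clearbody P Q A B K N C; lia.
have nxy : x \notin porbit (a' * b) y.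
  apply/negP => /porbitM_rr h; move/negP: cxy; apply; by rewrite rr_csym.
rewrite nxy /= in cab; have k2 := K2.
set P := #|porbits (a' * b)%g| in IH cab *.
set Q := #|porbits (tperm x y * (a' * b))%g| in cab *.
set A := #|porbits a'| in IH ca.
set B := #|porbits b| in IH *.
set K := ncomp a' b in IH k2 *.
set K0 := ncomp a b in k2 *.
set N := #|T| in IH *.
set C := #|porbits a| in ca *.
clearbody P Q A B K K0 N C; lia.
Qed.
End Step.

Lemma card_step a x : a x != x ->
  #|porbits (tperm x (a x) * a)%g| = (#|porbits a|).+1.
Proof.
move=> ax; have h1 : a x \in porbit a x by have := mem_porbit a 1 x; rewrite expg1.
have := porbits_mul_tperm a x (a x).
rewrite porbit_sym h1 eq_sym ax /= => h; lia.
Qed.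

Lemma card_mul_tperm_r s x y : x != y -> x \in porbit s y ->
  #|porbits (s * tperm x y)%g| = (#|porbits s|).+1.
Proof.
move=> xy xs.
rewrite -porbitsV invMg tpermV.
have := porbits_mul_tperm s^-1 x y.
rewrite porbitV xs xy porbitsV /= => /= h; rewrite addn0 addn1 in h; exact: h.
Qed.

Theorem genus a b :
  #|porbits a| + #|porbits b| + #|porbits (a * b)| <= #|T| + 2 * ncomp a b.
Proof.
move: {2}(#|T| - #|porbits a|) (leqnn (#|T| - #|porbits a|)) => n.
elim: n a b => [|n IH] a b Hn.
  case: (eqVneq a 1%g) => [->|].
    rewrite card_porbits1 mul1g /ncomp.
    have -> : [set comp 1 b z | z : T] = porbits b by apply: eq_imset => z; apply: comp1.
    lia.
  move=> na.
  have [x ax] : exists x, a x != x.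
    apply/existsP; apply: contraR na => /existsPn h; apply/eqP/permP=> z.
    by rewrite perm1; apply/eqP; apply: negbNE (h z).
  have := card_step ax; have := card_porbits (tperm x (a x) * a)%g; lia.
case: (eqVneq a 1%g) => [->|na].
  rewrite card_porbits1 mul1g /ncomp.
  have -> : [set comp 1 b z | z : T] = porbits b by apply: eq_imset => z; apply: comp1.
  lia.
have [x ax] : exists x, a x != x.
  apply/existsP; apply: contraR na => /existsPn h; apply/eqP/permP=> z.
  by rewrite perm1; apply/eqP; apply: negbNE (h z).
apply: (genus_step ax); apply: IH.
have := card_step ax; have := card_porbits (tperm x (a x) * a)%g; lia.
Qed.
End Genus.

Set Implicit Arguments. Unset Strict Implicit. Unset Printing Implicit Defensive.


Section Graph.
Variable G : plane_graph.
Local Notation D := (dart G).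
Local Notation sig := (@sigma G).
Local Notation alp := (@alpha G).

Lemma alpha_inj : injective (@alpha G).
Proof. exact: can_inj (@alphaK G). Qed.

Definition sg : {perm D} := perm (@sigma_inj G).
Definition al : {perm D} := perm alpha_inj.

Lemma vert_sigma (z : D) : vert (sigma z) = vert z.
Proof. by apply/eqP; rewrite eq_sym vertE fconnect1. Qed.

Lemma vert_iter n (z : D) : vert (iter n sig z) = vert z.
Proof. by elim: n => //= n IH; rewrite vert_sigma. Qed.

Lemma fc_phi (z : D) : fc (sigma (alpha z)) = fc z.
Proof. by apply/eqP; rewrite eq_sym fcE fconnect1. Qed.

Lemma porbit_sg (x y : D) : (y \in porbit sg x) = (vert x == vert y).
Proof.
rewrite porbit_fconnect vertE; apply: eq_connect => u w.
by rewrite /frel /= /sg permE.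
Qed.

Lemma porbit_ph (x y : D) : (y \in porbit (al * sg)%g x) = (fc x == fc y).
Proof.
rewrite porbit_fconnect fcE; apply: eq_connect => u w.
by rewrite /frel /= permM /sg /al !permE.
Qed.

Lemma card_vert : #|vertex G| <= #|porbits sg|.
Proof.
have -> : #|vertex G| = #|[set vert z | z in D]|.
  rewrite -cardsT; congr (#|pred_of_set _|); apply/setP=> v; rewrite inE.
  by case: (vert_surj v) => z <-; rewrite imset_f.
apply: card_ker => u w _ _ e.
by apply/eqP; rewrite -porbit_sg e porbit_id.
Qed.

Lemma card_face : #|face G| <= #|porbits (al * sg)%g|.
Proof.
have -> : #|face G| = #|[set fc z | z in D]|.
  rewrite -cardsT; congr (#|pred_of_set _|); apply/setP=> v; rewrite inE.
  by case: (fc_surj v) => z <-; rewrite imset_f.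
apply: card_ker => u w _ _ e.
by apply/eqP; rewrite -porbit_ph e porbit_id.
Qed.

Definition halfA := [set z : D | enum_rank z < enum_rank (alpha z)].

Lemma halfA_alpha (z : D) : (alpha z \in halfA) = (z \notin halfA).
Proof.
rewrite !inE alphaK -leqNgt.
have ne : (enum_rank (alp z) : nat) != enum_rank z.
  by apply: contra (alpha_nofix z) => /eqP /val_inj /enum_rank_inj ->.
by rewrite [RHS]leq_eqVlt (negbTE ne).
Qed.

Lemma card_halfA : #|D| = 2 * #|halfA|.
Proof.
rewrite -(cardsC halfA).
have -> : ~: halfA = alp @: halfA.
  apply/setP=> w; rewrite inE; apply/idP/imsetP.
    by move=> nw; exists (alpha w); rewrite ?alphaK // halfA_alpha.
  by case=> z zA ->; rewrite halfA_alpha zA.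
rewrite (card_imset _ (@alpha_inj)); lia.
Qed.

Lemma porbit_al (z w : D) : w \in porbit al z -> w = z \/ w = alp z.
Proof.
case/porbitP=> i ->; rewrite permX.
elim: i => [|i IH] /=; first by left.
case: IH => ->; rewrite /al permE; [right|left] => //.
by rewrite alphaK.
Qed.

Lemma card_al : #|D| <= 2 * #|porbits al|.
Proof.
rewrite card_halfA leq_mul2l /=.
have -> : #|halfA| = #|porbit al @: halfA|.
  rewrite card_in_imset // => z w zA wA e.
  have : w \in porbit al z by rewrite e porbit_id.
  case/porbit_al => // wz.
  by move: wA; rewrite wz halfA_alpha zA.
apply: subset_leq_card; apply/subsetP=> _ /imsetP[z _ ->]; exact: imset_f.
Qed.

Hypothesis Hs : simple_graph G.
Hypothesis H2 : two_connected G.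

Lemma vert_alpha_neq (z : D) : vert (alp z) != vert z.
Proof. by case: Hs. Qed.

Section Surgery.
Variables x y : D.
Hypothesis xy : x != y.
Hypothesis vxy : vert x = vert y.
Hypothesis fxy : fc x = fc y.
Let t := tperm x y.
Let s' := (sg * t)%g.
Let r := rr al s'.
Let v := vert x.

Lemma s'E (z : D) : vert z != v -> s' z = sig z.
Proof.
move=> nz; rewrite /s' permM /sg permE /t tpermD //.
  by apply: contra nz => /eqP e; rewrite /v e vert_sigma.
by apply: contra nz => /eqP e; rewrite /v vxy e vert_sigma.
Qed.

Lemma conn_iter (z : D) n : vert z != v -> connect r z (iter n sig z).
Proof.
move=> nz; elim: n => [|n IH] /=; first exact: connect0.
apply: connect_trans IH (connect1 _).
by rewrite /r /rr s'E ?vert_iter // eqxx !orbT.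
Qed.

Lemma conn_vert (z w : D) : vert z != v -> vert z = vert w -> connect r z w.
Proof.
move=> nz /eqP; rewrite vertE => /iter_findex <-; exact: conn_iter.
Qed.

Lemma conn_al (z : D) : connect r z (alp z).
Proof. by apply: connect1; rewrite /r /rr /al permE eqxx. Qed.

Lemma conn_all (z : D) : connect r x z.
Proof.
pose Q u := forall z : D, vert z = u -> connect r x z.
have Q0 : Q (vert (alp x)).
  move=> w e; apply: connect_trans (conn_al x) (conn_vert _ _) => //.
  exact: vert_alpha_neq.
have QS : forall u u', u != v -> u' != v -> adj u u' -> Q u -> Q u'.
  move=> u u' nu nu' /existsP[d /andP[/eqP du /eqP du']] Qu w e.
  apply: connect_trans (Qu d du) _; apply: connect_trans (conn_al d) _.
  by apply: conn_vert; rewrite du' // e.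
have Qall : forall u, u != v -> Q u.
  move=> u nu; case: H2 => _ /(_ v (vert (alp x)) u) h.
  have := h (vert_alpha_neq x) nu; case/connectP=> p.
  elim: p (vert (alp x)) (vert_alpha_neq x) Q0 => [|u1 p IH] u0 n0 Q0' /=.
    by move=> _ ->.
  case/andP=> /andP[/andP[a01 _] n1] pp e.
  exact: IH (QS _ _ n0 n1 a01 Q0') pp e.
case: (eqVneq (vert z) v) => ez.
  apply: connect_trans (Qall _ _ (alp z) erefl) _.
    by rewrite -ez vert_alpha_neq.
  by rewrite rr_csym; exact: conn_al.
exact: Qall ez z erefl.
Qed.

Lemma surgery_false : False.
Proof.
have g := genus al s'.
have cs : #|porbits s'| = (#|porbits sg|).+1.
  by apply: card_mul_tperm_r => //; rewrite porbit_sym porbit_sg vxy.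
have cp : #|porbits (al * s')%g| = (#|porbits (al * sg)%g|).+1.
  rewrite /s' mulgA; apply: card_mul_tperm_r => //.
  by rewrite porbit_sym porbit_ph fxy.
have nc : ncomp al s' <= 1.
  rewrite /ncomp -(cards1 (comp al s' x)); apply: subset_leq_card.
  by apply/subsetP=> _ /imsetP[z _ ->]; rewrite inE (comp_eq (conn_all z)).
have e := euler G; have cv := card_vert; have cf := card_face; have ca := card_al.
move: g; rewrite cs cp.
set A := #|porbits al| in ca *; set B := #|porbits sg| in cv *;
set C := #|porbits (al * sg)%g| in cf *; set K := ncomp al s' in nc *;
set N := #|D| in e ca *; set V := #|vertex G| in e cv; set F := #|face G| in e cf.
clearbody A B C K N V F; lia.
Qed.
End Surgery.

Lemma nodup (x y : D) : vert x = vert y -> fc x = fc y -> x = y.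
Proof.
move=> vxy fxy; apply/eqP; apply/negPn/negP => xy.
exact: (surgery_false xy vxy fxy).
Qed.

End Graph.

Set Implicit Arguments. Unset Strict Implicit. Unset Printing Implicit Defensive.


Lemma foldr_min_le (d : int) (s : seq int) e : e \in s -> (foldr Order.min d s <= e)%R.
Proof.
elim: s => //= h t IH; rewrite inE => /orP[/eqP ->|/IH h2].
  by rewrite ge_min lexx.
by rewrite ge_min h2 orbT.
Qed.

Lemma foldr_min_mem (d : int) (s : seq int) : foldr Order.min d s \in d :: s.
Proof.
elim: s => [|h t IH] /=; first by rewrite inE.
rewrite minEle; case: ifP => _; first by rewrite !inE eqxx orbT.
move: IH; rewrite !inE => /orP[->|->]; by rewrite ?orbT.
Qed.

Section Main.
Variable G : plane_graph.
Local Notation D := (dart G).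
Local Notation sig := (@sigma G).
Local Notation alp := (@alpha G).
Variable a : face G -> int.
Variable b : vertex G -> int.

Lemma on_faceP (d : D) : on_face (vert d) (fc d).
Proof. by apply/existsP; exists d; rewrite !eqxx. Qed.

Lemma on_faceP2 (d : D) : on_face (vert (alp d)) (fc d).
Proof. by apply/existsP; exists (sig (alp d)); rewrite fc_phi vert_sigma !eqxx. Qed.

Lemma bface_le w p : on_face w p -> (bface b p <= b w)%R.
Proof.
move=> h; apply: foldr_min_le; apply: map_f; by rewrite mem_filter h mem_enum.
Qed.

Lemma bface_ex p : exists w, on_face w p /\ bface b p = b w.
Proof.
have [d <-] := fc_surj p.
have mem : b (vert d) \in [seq b v | v <- enum (vertex G) & on_face v (fc d)].
  by apply: map_f; rewrite mem_filter on_faceP mem_enum.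
move: mem; rewrite /bface /minl.
case E : [seq b v | v <- enum (vertex G) & on_face v (fc d)] => [//|h t] _.
have M : foldr Order.min h (h :: t) \in h :: t.
  have := foldr_min_mem h (h :: t); rewrite in_cons => /orP[/eqP ->|//].
  exact: mem_head.
move: M; rewrite -E => /mapP[w].
rewrite mem_filter => /andP[hw _] e; exists w; split => //; by rewrite {1}E.
Qed.

Definition good (f : face G) := bounded f && (bface b f == -1)%R.

Hypothesis Hs : simple_graph G.
Hypothesis H2 : two_connected G.
Hypothesis Hadm : admissible a b.
Hypothesis HA : forall p' : face G, bounded p' -> (a p' + bface b p' = 0)%R.
Hypothesis H3 : forall (p' : face G) (v1 v2 : vertex G), bounded p' -> adj v1 v2 ->
      edge_on v1 v2 p' -> ~~ edge_on v1 v2 (outer G) ->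
      ((b v1 - bface b p') * (b v2 - bface b p') = 0)%R.

Lemma inner_edge (d : D) : fc d != outer G -> fc (alp d) != outer G ->
  ~~ edge_on (vert d) (vert (alp d)) (outer G).
Proof.
move=> n1 n2; apply/existsP => -[e /andP[/eqP fe H]].
case: Hs => _ inj.
case/orP: H => /andP[/eqP e1 /eqP e2].
  by move: n1; rewrite -(inj _ _ e1 e2) fe eqxx.
have e2' : vert (alp e) = vert (alp (alp d)) by rewrite alphaK.
by move: n2; rewrite -(inj _ _ e1 e2') fe eqxx.
Qed.

Lemma good_alpha (d : D) : fc d != outer G -> fc (alp d) != outer G ->
  good (fc d) -> good (fc (alp d)).
Proof.
move=> n1 n2 /andP[_ /eqP g1]; rewrite /good /bounded n2 /=.
set v1 := vert d; set v2 := vert (alp d).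
have ad : adj v1 v2 by apply/existsP; exists d; rewrite !eqxx.
have e1 : edge_on v1 v2 (fc d) by apply/existsP; exists d; rewrite !eqxx.
have e2 : edge_on v1 v2 (fc (alp d)).
  by apply/existsP; exists (alp d); rewrite alphaK !eqxx orbT.
have ni := inner_edge n1 n2.
have h1 := H3 n1 ad e1 ni; have h2 := H3 n2 ad e2 ni.
rewrite g1 in h1.
have l1 : (-1 <= b v1)%R by rewrite -g1; apply: bface_le; exact: on_faceP.
have l2 : (-1 <= b v2)%R by rewrite -g1; apply: bface_le; exact: on_faceP2.
have m1 : (bface b (fc (alp d)) <= b v1)%R.
  by apply: bface_le; rewrite /v1 -{1}(alphaK d); exact: on_faceP2.
have m2 : (bface b (fc (alp d)) <= b v2)%R by apply: bface_le; exact: on_faceP.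
move: h1 h2; set m := bface b (fc (alp d)).
move/eqP; rewrite mulf_eq0 => /orP[] /eqP h1 /eqP; rewrite mulf_eq0 => /orP[] /eqP h2;
  apply/eqP; lia.
Qed.

Lemma fc_sigma (d : D) : fc (sig d) = fc (alp d).
Proof. by rewrite -{1}(alphaK d) fc_phi. Qed.

Lemma good_sigma (d : D) : fc d != outer G -> fc (sig d) != outer G ->
  good (fc d) = good (fc (sig d)).
Proof.
rewrite fc_sigma => n1 n2; apply/idP/idP; first exact: good_alpha.
by move=> h; rewrite -(alphaK d); apply: good_alpha; rewrite ?alphaK.
Qed.

Lemma good_iter k (d : D) : (forall j, j <= k -> fc (iter j sig d) != outer G) ->
  good (fc d) = good (fc (iter k sig d)).
Proof.
elim: k => [//|k IH] H.
rewrite IH; last by move=> j jk; apply: H; lia.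
by apply: good_sigma; [apply: (H k) | apply: (H k.+1)]; lia.
Qed.

Lemma good_vertex (z0 z1 : D) : vert z0 = vert z1 -> good (fc z0) ->
  fc z1 != outer G -> good (fc z1).
Proof.
move=> /eqP; rewrite vertE => c g0 n1.
have sinj := @sigma_inj G.
set n := fingraph.order sig z0.
set k := findex sig z0 z1.
have kn : k < n by apply: findex_max.
have ik : iter k sig z0 = z1 by apply: iter_findex.
have io : iter n sig z0 = z0 by apply: iter_order.
have b0 : fc z0 != outer G by case/andP: g0.
case: (boolP [forall j : 'I_k.+1, fc (iter j sig z0) != outer G]) => hA.
  rewrite -ik -(good_iter (k:=k)) // => j jk.
  by move/forallP: hA => /(_ (Ordinal (jk : j < k.+1))).
case/forallPn: hA => -[i /= ilt]; rewrite negbK => /eqP oi.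
case: (boolP [forall j : 'I_(n - k).+1, fc (iter j sig z1) != outer G]) => hB.
  have e0 : iter (n - k) sig z1 = z0 by rewrite -ik -iterD subnK ?io // ltnW.
  rewrite (good_iter (k:=n - k) (d:=z1)) ?e0 // => j jk.
  by move/forallP: hB => /(_ (Ordinal (jk : j < (n - k).+1))).
case/forallPn: hB => -[j /= jlt]; rewrite negbK => /eqP oj.
have ej : iter j sig z1 = iter (j + k) sig z0 by rewrite iterD ik.
have j0 : j != 0%N.
  by apply/eqP => j0; move: n1; rewrite -oj j0 /= eqxx.
have jn : (j + k != n)%N.
  by apply/eqP => jn; move: b0; rewrite -oj ej jn io eqxx.
have e : iter i sig z0 = iter (j + k) sig z0.
  apply: (nodup Hs H2); first by rewrite !vert_iter.
  by rewrite -ej oi oj.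
have := findex_iter (_ : i < fingraph.order sig z0) ; rewrite e findex_iter.
  lia.
all: rewrite -/n; lia.
Qed.
End Main.

Set Implicit Arguments. Unset Strict Implicit. Unset Printing Implicit Defensive.


Section Conn.
Variable G : plane_graph.
Local Notation D := (dart G).
Local Notation sig := (@sigma G).
Local Notation alp := (@alpha G).
Hypothesis Hs : simple_graph G.
Hypothesis H2 : two_connected G.

Lemma third (u w : vertex G) : exists z, (z != u) && (z != w).
Proof.
case: (boolP [exists z, (z != u) && (z != w)]) => [/existsP//|/existsPn h].
exfalso.
have : #|vertex G| <= 2.
  rewrite -cardsT (leq_trans _ (_ : #|[set u; w]| <= 2)) //.
    apply: subset_leq_card; apply/subsetP=> z _; rewrite !inE.
    by move: (h z); rewrite negb_and !negbK.
  by rewrite cards2; case: (u != w).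
by case: H2 => h3 _; lia.
Qed.

Lemma degree (u : vertex G) : exists x y : D, [/\ x != y, vert x = u & vert y = u].
Proof.
have [x xu] := vert_surj u.
set w := vert (alp x).
have uw : u != w by rewrite /w -xu eq_sym (vert_alpha_neq Hs).
have [z /andP[zu zw]] := third u w.
case: H2 => _ /(_ w u z uw zw) /connectP[[|s p] /=].
  by move=> _ e; move: zu; rewrite e eqxx.
case/andP=> /andP[/andP[/existsP[y /andP[/eqP yu /eqP ys]] _] sw] _ _.
exists x, y; split => //.
by apply: contra sw => /eqP e; rewrite -ys -e.
Qed.

Lemma conn_prop (P : vertex G -> bool) :
  (forall u t, adj u t -> P u -> P t) -> forall u w, P u -> P w.
Proof.
move=> HP u w Pu.
have [z /andP[zu zw]] := third u w.
rewrite eq_sym in zu; rewrite eq_sym in zw.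
case: H2 => _ /(_ z u w zu zw) /connectP[p pth ->].
elim: p u pth Pu {zu} => [|s p IH] u //= /andP[/andP[/andP[us _] _] pth] Pu.
exact: IH pth (HP _ _ us Pu).
Qed.
End Conn.

Set Implicit Arguments. Unset Strict Implicit. Unset Printing Implicit Defensive.


Section Count.
Variable G : plane_graph.
Local Notation D := (dart G).
Hypothesis Hs : simple_graph G.
Hypothesis H2 : two_connected G.

Lemma flen_outer : flen (outer G) = Vinf G.
Proof.
rewrite /Vinf /flen.
have -> : [set v | on_face v (outer G)] = (@vert G) @: [set x : D | fc x == outer G].
  apply/setP=> v; rewrite inE; apply/existsP/imsetP.
    by case=> x /andP[fx /eqP xv]; exists x; rewrite ?inE.
  by case=> x; rewrite inE => fx ->; exists x; rewrite fx eqxx.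
rewrite card_in_imset // => x y; rewrite !inE => /eqP fx /eqP fy e.
by apply: (nodup Hs H2 e); rewrite fx fy.
Qed.

Lemma sum_flen : (\sum_(f : face G) flen f = #|D|)%N.
Proof.
rewrite -sum1_card (partition_big (fun x : D => fc x) predT) //=.
apply: eq_bigr => f _; rewrite /flen -sum1dep_card; apply: eq_bigl => x.
by [].
Qed.

Lemma sum_bounded : (\sum_(f : face G | bounded f) flen f + flen (outer G) = #|D|)%N.
Proof.
rewrite -sum_flen [RHS](bigD1 (outer G)) //= addnC; congr (_ + _).
Qed.

Lemma sum_bounded2 : (\sum_(f : face G | bounded f) 2 + 2 = 2 * #|face G|)%N.
Proof.
have e : (\sum_(f : face G) 2 = 2 * #|face G|)%N by rewrite sum_nat_const mulnC.
by rewrite -e [RHS](bigD1 (outer G)) //= addnC.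
Qed.
End Count.

Lemma sumPosz (I : finType) (P : pred I) (F : I -> nat) :
  (\sum_(i | P i) Posz (F i))%R = Posz (\sum_(i | P i) F i)%N.
Proof. by elim/big_rec2: _ => // i x y _ ->; rewrite PoszD. Qed.

Set Implicit Arguments. Unset Strict Implicit. Unset Printing Implicit Defensive.


Section Final.
Variable G : plane_graph.
Local Notation D := (dart G).
Local Notation sig := (@sigma G).
Local Notation alp := (@alpha G).
Variable b : vertex G -> int.
Hypothesis Hs : simple_graph G.
Hypothesis H2 : two_connected G.
Hypothesis H3 : forall (p' : face G) (v1 v2 : vertex G), bounded p' -> adj v1 v2 ->
      edge_on v1 v2 p' -> ~~ edge_on v1 v2 (outer G) ->
      ((b v1 - bface b p') * (b v2 - bface b p') = 0)%R.

Definition Gv (u : vertex G) := [exists z : D, (vert z == u) && good b (fc z)].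

Lemma iter_fix (d : D) n : sig d = d -> iter n sig d = d.
Proof. by move=> e; elim: n => //= n ->. Qed.

Lemma Gv_adj u t : adj u t -> Gv u -> Gv t.
Proof.
case/existsP=> d /andP[/eqP du /eqP dt] /existsP[z0 /andP[/eqP zu g0]].
have gv := good_vertex Hs H2 H3.
case: (boolP (fc d == outer G)) => od; last first.
  have gd := gv z0 d (etrans zu (esym du)) g0 od.
  by apply/existsP; exists (sig (alp d)); rewrite vert_sigma dt fc_phi eqxx.
case: (boolP (fc (alp d) == outer G)) => oa; last first.
  have gd := gv z0 (sig d) (etrans zu (esym (etrans (vert_sigma d) du))) g0.
  rewrite fc_sigma in gd; have {}gd := gd oa.
  by apply/existsP; exists (alp d); rewrite dt eqxx.
have sd : sig d = d.
  apply: (nodup Hs H2); first by rewrite vert_sigma.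
  by rewrite fc_sigma (eqP oa) (eqP od).
have [x [y [xy xu yu]]] := degree Hs H2 u.
have hx : x = d.
  have : fconnect sig d x by rewrite -vertE du xu.
  by move/iter_findex <-; rewrite iter_fix.
have hy : y = d.
  have : fconnect sig d y by rewrite -vertE du yu.
  by move/iter_findex <-; rewrite iter_fix.
by move: xy; rewrite hx hy eqxx.
Qed.

Lemma all_good (d0 : D) : good b (fc d0) -> forall f : face G, bounded f -> good b f.
Proof.
move=> g0 f bf.
have Gall : forall w, Gv w.
  move=> w; apply: (conn_prop H2 Gv_adj (u := vert d0)).
  by apply/existsP; exists d0; rewrite eqxx g0.
have [d fd] := fc_surj f; rewrite -fd in bf *.
have /existsP[z /andP[/eqP zd gz]] := Gall (vert d).
exact: (good_vertex Hs H2 H3 zd gz bf).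
Qed.
End Final.

Unset Implicit Arguments.
Local Open Scope ring_scope.

Theorem lemma4p2 (G : plane_graph) (a : face G -> int) (b : vertex G -> int) :
  simple_graph G -> two_connected G -> admissible a b ->
  (exists (p : face G) (v v' : vertex G),
      bounded p /\ adj v v' /\ edge_on v v' p /\ edge_on v v' (outer G) /\
      b v = 0 /\ b v' = 0 /\
      (b v - bface b p) * (b v' - bface b p) = 1) ->
  (forall p' : face G, bounded p' -> a p' + bface b p' = 0) ->
  (forall (p' : face G) (v1 v2 : vertex G), bounded p' -> adj v1 v2 ->
      edge_on v1 v2 p' -> ~~ edge_on v1 v2 (outer G) ->
      (b v1 - bface b p') * (b v2 - bface b p') = 0) ->
  [/\ (forall w : vertex G, -1 <= b w),
      (forall p' : face G, bounded p' -> a p' = 1),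
      (Vinf G)%:Z - 2 <= Bval a b &
      (Bval a b = (Vinf G)%:Z - 2 <->
       [/\ (forall w, on_face w (outer G) -> b w = 0),
           (forall w, ~~ on_face w (outer G) -> b w = -1) &
           (forall p' : face G, bounded p' -> a p' = 1)])].
Proof.
move=> Hs H2 Hadm [p0 [v [v' [bp0 [avv [ep [eo [bv [bv' prod]]]]]]]]] HA H3.
have [d0 [fd0 vd0]] : exists d : dart G, fc d = p0 /\ b (vert d) = 0.
  case/existsP: ep => d /andP[/eqP fd /orP[] /andP[/eqP e _]];
    by exists d; rewrite e.
have g0 : good b (fc d0).
  rewrite /good fd0 bp0 /=; apply/eqP.
  have le0 : bface b p0 <= 0 by rewrite -vd0 -fd0; apply: bface_le; exact: on_faceP.
  move: prod; rewrite bv bv' sub0r mulrNN; set m := bface b p0 in le0 *; nia.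
have ag := all_good Hs H2 H3 g0.
have a1 : forall p' : face G, bounded p' -> a p' = 1.
  move=> p' bp; have := HA p' bp; case/andP: (ag p' bp) => _ /eqP ->; lia.
have bge : forall w, -1 <= b w.
  move=> w; have [d [dw]] : exists d : dart G, vert d = w /\ bounded (fc d).
    have [x [y [xy xw yw]]] := degree Hs H2 w.
    case: (boolP (fc x == outer G)) => ox; last by exists x.
    exists y; split => //; apply: contra xy => oy; apply/eqP.
    by apply: (nodup Hs H2); rewrite ?xw ?yw // (eqP ox) (eqP oy).
  move=> bd; case/andP: (ag _ bd) => _ /eqP <-; rewrite -dw; apply: bface_le.
  exact: on_faceP.
have bout : forall w, on_face w (outer G) -> 0 <= b w by case: Hadm.
pose g w := b w + 1 - Posz (on_face w (outer G)).
have gge : forall w, 0 <= g w.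
  move=> w; rewrite /g; case: (boolP (on_face w (outer G))) => h /=.
    by have := bout w h; lia.
  by have := bge w; lia.
have eB : Bval a b = 2 * \sum_w b w + Posz (\sum_(f : face G | bounded f) flen f)%N
   - Posz (\sum_(f : face G | bounded f) 2)%N.
  rewrite /Bval -addrA; congr (_ + _).
  rewrite -!sumPosz -sumrB; apply: eq_bigr => p bp; rewrite a1 // mulr1.
  by [].
have eG : \sum_w g w = \sum_w b w + Posz #|vertex G| - Posz (Vinf G).
  rewrite /g sumrB big_split /=; congr (_ + _ - _).
    by rewrite -sum1_card -sumPosz.
  rewrite sumPosz; congr Posz.
  rewrite /Vinf -sum1dep_card [RHS]big_mkcond /=; apply: eq_bigr => w _.
  by case: (on_face w (outer G)).
have s1 := sum_bounded G; have s2 := sum_bounded2 G; have fo := flen_outer Hs H2.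
have eu := euler G; have hA := card_halfA G.
have gs : 0 <= \sum_w g w by apply: sumr_ge0 => w _; exact: gge.
have key : Bval a b - (Posz (Vinf G) - 2) = 2 * \sum_w g w.
  rewrite eB eG.
  move: s1 s2 fo eu hA.
  set SB := (\sum_(f : face G | bounded f) flen f)%N.
  set S2 := (\sum_(f : face G | bounded f) 2)%N.
  set Sb := \sum_w b w.
  set N := #|dart G|. set V := #|vertex G|. set F := #|face G|.
  set VI := Vinf G. set FO := flen (outer G). set H := #|halfA G|.
  clearbody SB S2 Sb N V F VI FO H => s1 s2 fo eu hA.
  lia.
split => //.
- by lia.
split.
- move=> hB.
  have g0' : \sum_w g w = 0 by lia.
  have gz := psumr_eq0P (fun w _ => gge w) g0'.
  split => //.
    by move=> w h; have := gz w isT; rewrite /g h /=; lia.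
  by move=> w h; have := gz w isT; rewrite /g (negbTE h) /=; lia.
- case=> hon hoff _.
  have g0' : \sum_w g w = 0.
    apply: big1 => w _; rewrite /g; case: (boolP (on_face w (outer G))) => h /=.
      by rewrite hon //; lia.
    by rewrite hoff //; lia.
  lia.
Qed.
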